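(* Let $(L,\le)$ be an infinite linearly ordered set and $\kappa:L\to\{+,-,0\}$ a coloring such that $L$ is not of type $\infty_{+,-,0}$. Then $L$ can be decomposed into finitely many intervals $L=L_1\,\dot\cup\,L_2\,\dot\cup\cdots\dot\cup\,L_m$ with $L_1\prec L_2\prec\cdots\prec L_m$ such that $|\kappa(L_i)|\le 2$ for every $i\le m$.
   Context: $L$ is of type $\infty_{+,-,0}$ if for every natural number $n$ there is a sequence $a_1<a_2<\dots<a_{3(n+1)}$ in $L$ with $\kappa(a_{3i+1})=+$, $\kappa(a_{3i+2})=-$, $\kappa(a_{3i+3})=0$ for all $i\le n$. For intervals $I,J$, $I\prec J$ means $a<b$ for all $a\in I$, $b\in J$. *)

(* Defs.v *)
From HB Require Import structures.
From mathcomp Require Import all_boot all_order.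
Set Implicit Arguments. Unset Strict Implicit. Unset Printing Implicit Defensive.
Import Order.TTheory.
Local Open Scope order_scope.

Inductive color := cplus | cminus | czero.

Definition color_eqb (a b : color) : bool :=
  match a, b with
  | cplus, cplus | cminus, cminus | czero, czero => true | _, _ => false end.
Lemma color_eqP : Equality.axiom color_eqb.
Proof. by move=> [] [] /=; constructor. Qed.
HB.instance Definition _ := hasDecEq.Build color color_eqP.

Section Defs.
Context {disp : Order.disp_t} {L : orderType disp}.

Definition infinite_type : Prop := ~ exists s : seq L, forall x : L, x \in s.

(* L is of type oo_{+,-,0}: for every n there is a strictly increasing
   a_0 < ... < a_{3(n+1)-1} with colours +,-,0 repeated (0-indexed). *)
Definition type_inf_pm0 (kappa : L -> color) : Prop :=
  forall n : nat, exists a : nat -> L,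
    (forall i j, (i < j)%N -> (j < 3 * n.+1)%N -> a i < a j) /\
    (forall i, (i <= n)%N ->
       [/\ kappa (a (3 * i)%N) = cplus,
           kappa (a (3 * i).+1) = cminus &
           kappa (a (3 * i).+2) = czero]).

Definition is_interval (I : L -> Prop) : Prop :=
  forall x y z : L, I x -> I z -> x <= y -> y <= z -> I y.

Definition interval_prec (I J : L -> Prop) : Prop :=
  forall a b : L, I a -> J b -> a < b.

Definition image_card_le2 (kappa : L -> color) (I : L -> Prop) : Prop :=
  exists s : seq color, (size s <= 2)%N /\ forall x, I x -> kappa x \in s.

End Defs.

(* Main.v *)
Require Import Defs.
From HB Require Import structures.
From mathcomp Require Import all_boot all_order.
From mathcomp Require Import zify.
From Stdlib Require Import Classical.
Local Open Scope order_scope.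
Import Order.TTheory.

Definition other (c : color) : color := match c with cplus => cminus | _ => cplus end.

Section Aux.
Context {disp : Order.disp_t} {L : orderType disp} (kappa : L -> color).

Fixpoint occ (S : L -> Prop) (w : seq color) : Prop :=
  match w with
  | [::] => True
  | c :: w' => exists a, S a /\ kappa a = c /\ occ (fun y => S y /\ a < y) w'
  end.

Lemma occ_mono w : forall S T, (forall x, S x -> T x) -> occ S w -> occ T w.
Proof.
induction w as [|c w IH]; simpl; auto.
intros S T H [b [Sb [kb o]]]. exists b; split; [auto|split; auto].
eapply IH; [|exact o]. simpl; intros x [Sx bx]; auto.
Qed.

Definition PP (S : L -> Prop) (m : nat) (Ls : nat -> L -> Prop) : Prop :=
  (forall i, (i < m)%N -> is_interval (Ls i) /\ exists x, Ls i x) /\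
  (forall x, S x -> exists i, (i < m)%N /\ Ls i x) /\
  (forall i, (i < m)%N -> forall x, Ls i x -> S x) /\
  (forall i j, (i < j)%N -> (j < m)%N -> interval_prec (Ls i) (Ls j)) /\
  (forall i, (i < m)%N -> exists c, forall x, Ls i x -> kappa x <> c).

Lemma PP_empty : PP (fun _ => False) 0 (fun _ _ => False).
Proof. repeat split; intros; try done. Qed.

Lemma cons_opt S T J m Ls : PP T m Ls -> is_interval J ->
  (exists c, forall x, J x -> kappa x <> c) ->
  (forall x, J x -> S x) -> (forall x, T x -> S x) ->
  (forall x, S x -> J x \/ T x) -> interval_prec J T ->
  exists m' Ls', PP S m' Ls'.
Proof.
intros [H1 [H2 [H3 [H4 H5]]]] HJ Hc HJS HTS HST Hp.
case (classic (exists x, J x)) => [Hne|Hem].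
- exists m.+1, (fun i => if i is i'.+1 then Ls i' else J).
  split; [|split; [|split; [|split]]].
  + intros [|i] Hi; [split; auto|]. apply H1; auto.
  + intros x Sx. case (HST x Sx) => [Jx|Tx].
    * exists 0%N; split; auto.
    * case (H2 x Tx) => [i [Hi Lx]]. exists i.+1; split; auto.
  + intros [|i] Hi x Hx; [auto|]. apply HTS; eapply H3; eauto.
  + intros [|i] [|j] Hij Hj; try done.
    * intros a b Ja Lb. apply Hp; auto. eapply H3; eauto.
    * apply H4; auto.
  + intros [|i] Hi; [auto|]. apply H5; auto.
- exists m, Ls. split; [|split; [|split; [|split]]]; auto.
  + intros x Sx. case (HST x Sx) => [Jx|Tx]; [exfalso; apply Hem; eauto|auto].
  + intros i Hi x Hx. apply HTS; eapply H3; eauto.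
Qed.

Lemma main w : forall S, is_interval S -> ~ occ S w -> exists m Ls, PP S m Ls.
Proof.
induction w as [|c w IH]; intros S HS Hn.
{ exfalso; apply Hn; exact I. }
destruct w as [|d w''].
{ eapply (@cons_opt S (fun _ => False) S 0 (fun _ _ => False) PP_empty); auto.
  all: try (exists c; intros x Sx kx; apply Hn; exists x; split; [auto|split; [auto|exact I]]).
  all: try (intros ? []; fail).
  all: try (intros ? ? _ []). }
pose U := fun x => S x /\ exists a, S a /\ kappa a = c /\ a < x.
have HU : is_interval U.
{ intros x y z [Sx [a [Sa [ka ax]]]] [Sz _] xy yz. split; [exact: HS Sx Sz xy yz|].
  exists a; split; auto; split; auto. exact: lt_le_trans ax xy. }
have HnU : ~ occ U (d :: w'').
{ intros [b [[Sb [a [Sa [ka ab]]]] [kb o]]]. apply Hn. exists a. split; auto. split; auto.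
  exists b. split; [split; auto|]. split; auto.
  eapply occ_mono; [|exact o]. simpl. intros y [[Sy _] By]. split; [split; auto|auto].
  exact: lt_trans ab By. }
destruct (IH U HU HnU) as [m [Ls HP]].
pose D := fun x => S x /\ ~ (exists a, S a /\ kappa a = c /\ a < x).
pose D1 := fun x => D x /\ kappa x <> c.
pose D2 := fun x => D x /\ kappa x = c.
pose T1 := fun x => D2 x \/ U x.
have DU : interval_prec D U.
{ intros a b [Sa Na] [Sb [a0 [Sa0 [ka0 a0b]]]]. rewrite ltNge; apply/negP => ba.
  apply Na. exists a0; split; auto; split; auto. exact: lt_le_trans a0b ba. }
have [m1 [Ls1 HP1]] : exists m' Ls', PP T1 m' Ls'.
{ eapply (@cons_opt T1 U D2 m Ls HP).
  - intros x y z [[Sx Nx] kx] [[Sz Nz] kz] xy yz.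
    have zx : z <= x.
    { rewrite leNgt; apply/negP => xz. apply Nz. exists x; split; auto. }
    have yx : y = x. { apply/eqP; rewrite eq_le xy andbT. exact: le_trans yz zx. }
    by rewrite yx; split; [split|].
  - apply (ex_intro _ (other c)).
    intros x [_ kx]; rewrite kx; destruct c; discriminate.
  - intros x Hx; left; auto.
  - intros x Hx; right; auto.
  - intros x Hx; auto.
  - intros a b [Da _] Ub. exact: DU. }
eapply (@cons_opt S T1 D1 m1 Ls1 HP1).
- intros x y z [[Sx Nx] kx] [[Sz Nz] kz] xy yz.
  have Sy : S y by exact: HS Sx Sz xy yz.
  have Ny : ~ (exists a, S a /\ kappa a = c /\ a < y).
  { intros [a [Sa [ka ay]]]. apply Nz. exists a; split; auto; split; auto.
    exact: lt_le_trans ay yz. }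
  split; [split; auto|]. intros ky. apply Nz. exists y; split; auto; split; auto.
  rewrite lt_neqAle yz andbT. apply/eqP => e; subst; auto.
- exists c. intros x [_ kx]; auto.
- intros x [[Sx _] _]; auto.
- intros x [[[Sx _] _]|[Sx _]]; auto.
- intros x Sx. case (classic (exists a, S a /\ kappa a = c /\ a < x)) => Hw.
  + right; right; split; auto.
  + case (classic (kappa x = c)) => kx.
    * right; left; split; auto; split; auto.
    * left; split; auto; split; auto.
- intros a b [[Sa Na] ka] [[[Sb Nb] kb]|Ub].
  + rewrite lt_neqAle. apply/andP; split.
    * apply/eqP => e; subst; auto.
    * rewrite leNgt; apply/negP => ba. apply Na. exists b; split; auto.
  + exact: DU.
Qed.

Lemma occ_seq w : forall c S, occ S (c :: w) -> exists a : nat -> L,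
  (forall i j, (i < j)%N -> (j < (size w).+1)%N -> a i < a j) /\
  (forall i, (i < (size w).+1)%N -> S (a i) /\ kappa (a i) = nth cplus (c :: w) i).
Proof.
induction w as [|d w IH]; intros c S [b [Sb [kb o]]].
- exists (fun _ => b). split.
  + intros [|i] [|j]; done.
  + intros [|i] Hi; done.
- destruct (IH d _ o) as [a' [Ha1 Ha2]].
  exists (fun i => if i is i'.+1 then a' i' else b). split.
  + intros [|i] [|j] Hij Hj; try done.
    * have [[_ H] _] := Ha2 j Hj. exact H.
    * apply Ha1; auto.
  + intros [|i] Hi; [done|]. have [[Sa _] ka] := Ha2 i Hi. split; auto.
Qed.

End Aux.

Theorem proposition2p2 (disp : Order.disp_t) (L : orderType disp)
    (kappa : L -> color) :
  infinite_type (L := L) -> ~ type_inf_pm0 kappa ->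
  exists (m : nat) (Ls : nat -> L -> Prop),
    (forall i, (i < m)%N -> is_interval (Ls i) /\ exists x, Ls i x) /\
    (forall x : L, exists i, (i < m)%N /\ Ls i x) /\
    (forall i j, (i < j)%N -> (j < m)%N -> interval_prec (Ls i) (Ls j)) /\
    (forall i, (i < m)%N -> image_card_le2 kappa (Ls i)).
Proof.
intros _ Hn.
destruct (not_all_ex_not _ _ Hn) as [n Hn'].
pose f := fun k : nat => match (k %% 3)%N with 0 => cplus | 1 => cminus | _ => czero end.
have Hocc : ~ occ kappa (fun _ => True) (mkseq f (3 * n.+1)).
{ intros Ho. apply Hn'.
  have Hs := size_mkseq f (3 * n.+1).
  destruct (mkseq f (3 * n.+1)) as [|c w] eqn:Ew; [simpl in Hs; lia|].
  destruct (@occ_seq _ _ kappa _ _ _ Ho) as [a [Ha1 Ha2]].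
  simpl in Hs.
  exists a. split.
  - intros i j Hij Hj. apply Ha1; auto; rewrite Hs; auto.
  - intros i Hi.
    have E : forall k, (k < 3 * n.+1)%N -> kappa (a k) = f k.
    { intros k Hk. have [_ ->] := Ha2 k (ltac:(rewrite Hs; exact Hk)).
      rewrite -Ew nth_mkseq //. }
    rewrite !E; try lia. rewrite /f.
    have -> : ((3 * i) %% 3 = 0)%N by lia.
    have -> : ((3 * i).+1 %% 3 = 1)%N by lia.
    have -> : ((3 * i).+2 %% 3 = 2)%N by lia.
    done. }
have HT : is_interval (fun _ : L => True) by [].
destruct (@main _ _ kappa _ _ HT Hocc) as [m [Ls [H1 [H2 [H3 [H4 H5]]]]]].
exists m, Ls. split; [auto|split; [|split; [auto|]]].
- intros x; apply H2; done.
- intros i Hi. destruct (H5 i Hi) as [c Hc].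
  exists (match c with cplus => [:: cminus; czero] | cminus => [:: cplus; czero]
          | czero => [:: cplus; cminus] end).
  split; [by destruct c|].
  intros x Hx. have := Hc x Hx. by destruct c, (kappa x).
Qed.
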